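(* Let $q$ be a prime power and $n\ge 3$ an integer. The matroid $\overline{\mathrm{PG}}(n-1,q)$ is $\mathrm{GF}(q)$-regular, i.e. it is representable over every field having $\mathrm{GF}(q)$ as a proper subfield.
   Context: Let $\mathbb F$ be a field with a $\mathrm{GF}(q)$-subfield, let $A$ be a $\mathrm{GF}(q)$-matrix with $n$ rows whose columns (indexed by $E(N)$) represent $N\cong \mathrm{PG}(n-1,q)$. Let $L_0$ be a line of $N$, $v\in \mathrm{col}_{\mathbb F}(A[L_0])$ a vector not parallel to any column of $A[L_0]$, $f\in E(N)-L_0$, and $\mathcal L$ the set of lines of $N$ in $\mathrm{cl}_N(L_0\cup\{f\})$ not containing $f$. For each $L\in\mathcal L$ let $v_L$ be a nonzero vector in $\mathrm{col}_{\mathbb F}(A[L])\cap\mathrm{col}_{\mathbb F}(v\,|\,A[f])$, and let $\overline A$ be $A$ with one new column $x_L=v_L$ appended for each $L\in\mathcal L$. The matroid represented by the columns of $\overline A$ is, up to isomorphism, independent of all choices (including $\mathbb F$); $\overline{\mathrm{PG}}(n-1,q)$ denotes any matroid isomorphic to it. *)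

(* Defs.v *)
From HB Require Import structures.
From mathcomp Require Import all_boot all_order all_algebra all_field.
Set Implicit Arguments. Unset Strict Implicit. Unset Printing Implicit Defensive.
Import GRing.Theory.
Local Open Scope ring_scope.

Section ColumnMatroid.
(* Column matroid of a family of vectors w : I -> F^r (vectors written as
   row vectors).  The ground set is (a subset of) the finite index type I. *)
Variables (F : fieldType) (I : finType) (r : nat) (w : I -> 'rV[F]_r).

Definition spanS (S : {set I}) : 'M[F]_r := (\sum_(i in S) <<w i>>)%MS.
Definition rk (S : {set I}) : nat := \rank (spanS S).
Definition indep (S : {set I}) : bool := rk S == #|S|.
Definition cl (S : {set I}) : {set I} := [set i | rk (i |: S) == rk S].
Definition is_flat (S : {set I}) : bool := cl S \subset S.
Definition is_line (L : {set I}) : bool := is_flat L && (rk L == 2%N).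
End ColumnMatroid.

(* A : 'I_m -> GF(q)^n represents PG(n-1,q): its columns are exactly one
   nonzero representative of each 1-dimensional subspace of GF(q)^n. *)
Definition is_PG_rep (K : fieldType) (n m : nat) (A : 'I_m -> 'rV[K]_n) : Prop :=
  [/\ forall i, A i != 0,
      forall i j, i != j -> ~~ (A i <= A j)%MS
    & forall x : 'rV[K]_n, x != 0 -> exists i, (x <= A i)%MS].

Definition calL (K : fieldType) (n m : nat) (A : 'I_m -> 'rV[K]_n)
  (L0 : {set 'I_m}) (f : 'I_m) : {set {set 'I_m}} :=
  [set L : {set 'I_m} | [&& is_line A L, L \subset cl A (f |: L0) & f \notin L]].

(* Ground type of Abar: the columns of A, plus one column x_L for each L
   (only L in calL are in the ground set). *)
Definition PGbar_ground (K : fieldType) (n m : nat) (A : 'I_m -> 'rV[K]_n)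
  (L0 : {set 'I_m}) (f : 'I_m) : {set ('I_m + {set 'I_m})} :=
  [set x : ('I_m + {set 'I_m})%type |
     match x with inl _ => true | inr L => L \in calL A L0 f end].

Definition PGbar_vec (K F : fieldType) (phi : {rmorphism K -> F}) (n m : nat)
  (A : 'I_m -> 'rV[K]_n) (vL : {set 'I_m} -> 'rV[F]_n) :
  ('I_m + {set 'I_m}) -> 'rV[F]_n :=
  fun x => match x with inl i => map_mx phi (A i) | inr L => vL L end.

Definition representable_over (F : fieldType) (I : finType) (r : nat)
  (w : I -> 'rV[F]_r) (E : {set I}) (F' : fieldType) : Prop :=
  exists (r' : nat) (w' : I -> 'rV[F']_r'),
    forall S : {set I}, S \subset E -> indep w S = indep w' S.

(* GF(q)-regular: representable over every field having GF(q) as a proper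
   subfield (a copy of GF(q) given by a non-surjective ring embedding). *)
Definition GFq_regular (q : nat) (F : fieldType) (I : finType) (r : nat)
  (w : I -> 'rV[F]_r) (E : {set I}) : Prop :=
  forall (K' : finFieldType) (F' : fieldType) (psi : {rmorphism K' -> F'}),
    #|K'| = q -> ~ (forall y : F', exists x : K', psi x = y) ->
    representable_over w E F'.

(* Main.v *)
Require Import Defs.
From HB Require Import structures.
From mathcomp Require Import all_boot all_order all_algebra all_field.
From mathcomp Require Import all_fingroup all_solvable.
From Stdlib Require Import Classical.
Set Implicit Arguments. Unset Strict Implicit. Unset Printing Implicit Defensive.
Import GRing.Theory FinRing.Theory.
Local Open Scope ring_scope.

Lemma ffgen (K : finFieldType) : exists a : K, forall x : K, x != 0 -> exists i : nat, x = a ^+ i.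
Proof.
have /cyclicP[u Du] := field_unit_group_cyclic [set: {unit K}]%G.
exists (val u) => x nx.
have : finField_unit nx \in <[u]>%g by rewrite -Du inE.
case/cycleP=> i Di; exists i.
by rewrite -val_unitX -Di.
Qed.

Lemma min_exists (T : Type) (Z : T -> Prop) (sz : T -> nat) (t0 : T) : Z t0 ->
  exists g, Z g /\ forall h, Z h -> (sz g <= sz h)%N.
Proof.
move=> Z0; apply: NNPP => H.
have H2 : forall g, Z g -> exists h, Z h /\ (sz h < sz g)%N.
  move=> g Zg; apply: NNPP => Hn; apply: H; exists g; split=> // h Zh.
  rewrite leqNgt; apply/negP => lt; apply: Hn; by exists h.
suff: forall n g, (sz g <= n)%N -> ~ Z g by move/(_ _ t0 (leqnn _)).
elim=> [|n IH] g le Zg.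
  by have [h [_ ]] := H2 g Zg; rewrite ltnNge (leq_trans le (leq0n _)).
have [h [Zh lt]] := H2 g Zg; apply: (IH h) => //; rewrite -ltnS; exact: leq_trans lt le.
Qed.

Section FFhom.
Variables (p : nat) (K K' : finFieldType).
Hypotheses (pK : p \in [pchar K]) (pK' : p \in [pchar K']) (hc : #|K| = #|K'|).
Local Notation R := (pPrimeCharType pK).
Local Notation R' := (pPrimeCharType pK').

Lemma ff_hom_aux : exists s : R -> R',
  [/\ forall x y, s (x - y) = s x - s y, forall x y, s (x * y) = s x * s y & s 1 = 1].
Proof.
pose i1 := in_alg R; pose i2 := in_alg R'.
have [a Ha] := ffgen K.
pose Z := fun h : {poly 'F_p} => (h != 0) && root (map_poly i1 h) a.
pose q := #|K|.
pose P0 : {poly 'F_p} := 'X^q - 'X.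
have q1 : (1 < q)%N by apply: finNzRing_gt1.
have P0nz : P0 != 0.
  rewrite -size_poly_eq0 /P0 size_polyDl ?size_polyXn //.
  by rewrite size_polyN size_polyX ltnS.
have ZP0 : Z P0.
  rewrite /Z P0nz /= /root rmorphB /= map_polyXn map_polyX !hornerE.
  by rewrite (expf_card (a : K)) subrr.
have [g [Zg ming]] := @min_exists _ (fun h => Z h) (fun h : {poly _} => size h) _ ZP0.
have key : forall h, root (map_poly i1 h) a -> g %| h.
  move=> h rh; apply/modp_eq0P; apply/eqP; apply: contraT => nz.
  have : Z (h %% g).
    rewrite /Z nz /= /root.
    move: rh; rewrite /root {1}(divp_eq h g) rmorphD rmorphM /= !hornerE.
    case/andP: Zg => _ /eqP ->; by rewrite mulr0 add0r.
  move/ming; rewrite leqNgt ltn_modp; by case/andP: Zg => ->.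
have gP0 : g %| P0 by apply: key; case/andP: ZP0.
have : map_poly i2 g %| \prod_(x : R') ('X - x%:P).
  rewrite -finField_genPoly -hc -/q.
  have -> : 'X^q - 'X = map_poly i2 P0 by rewrite rmorphB /= map_polyXn map_polyX.
  by rewrite dvdp_map.
case/dvdp_prod_XsubC=> m Dg.
have szg : (1 < size g)%N.
  case/andP: Zg => gnz rg.
  by rewrite -(size_map_poly i1) (root_size_gt1 _ rg) // map_poly_eq0.
move: (eqp_size Dg); rewrite size_prod_XsubC size_map_poly.
case Em: (mask m (index_enum R')) => [|b s]; first by move=> e; rewrite e in szg.
move=> _.
have rb : root (map_poly i2 g) b.
  rewrite (eqp_root Dg) Em; rewrite (@eq_big_seq _ _ _ _ _ _ (fun x => 'X - x%:P)) //.
  by rewrite root_prod_XsubC mem_head.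
have T : forall h1 h2, (map_poly i1 h1).[a] = (map_poly i1 h2).[a] ->
    (map_poly i2 h1).[b] = (map_poly i2 h2).[b].
  move=> h1 h2 e; apply/eqP; rewrite -subr_eq0.
  have : root (map_poly i2 (h1 - h2)) b.
    apply: root_dvdp rb; rewrite dvdp_map; apply: key.
    by rewrite /root rmorphB /= hornerD hornerN e subrr.
  by rewrite /root rmorphB /= hornerD hornerN.
have hex : forall x : R, exists i, (x == 0) || (x == a ^+ i).
  move=> x; case: (eqVneq x 0) => [->|nx]; first by exists 0%N.
  by have [i ->] := Ha x nx; exists i; rewrite eqxx orbT.
pose n := fun x => xchoose (hex x).
pose P := fun x : R => if x == 0 then 0 else ('X^(n x) : {poly 'F_p}).
have PE : forall x, (map_poly i1 (P x)).[a] = x.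
  move=> x; rewrite /P; case: (eqVneq x 0) => [->|nx]; first by rewrite rmorph0 horner0.
  have := xchooseP (hex x); rewrite -/(n x) => /orP[/eqP x0|/eqP xE]; first by move: nx; rewrite x0 eqxx.
  by rewrite map_polyXn hornerXn; apply/esym.
exists (fun x => (map_poly i2 (P x)).[b]); split.
- move=> x y; rewrite -hornerN -hornerD -rmorphB; apply: T.
  by rewrite rmorphB /= hornerD hornerN !PE.
- move=> x y; rewrite -hornerM -rmorphM; apply: T.
  by rewrite rmorphM /= hornerM !PE.
- have := T (P 1) 1; rewrite PE !rmorph1 !hornerC; exact.
Qed.
End FFhom.

Section MkRmorph.
Variables (K K' : fieldType) (s : K -> K').
Hypotheses (sB : forall x y, s (x - y) = s x - s y) (sM : forall x y, s (x * y) = s x * s y) (s1 : s 1 = 1).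
Definition sfun := s.
HB.instance Definition _ := GRing.isZmodMorphism.Build K K' sfun sB.
HB.instance Definition _ := GRing.isMonoidMorphism.Build K K' sfun (s1, sM).
Definition srm : {rmorphism K -> K'} := sfun.
End MkRmorph.

Lemma ff_iso (K K' : finFieldType) : #|K| = #|K'| -> exists f : {rmorphism K -> K'}, True.
Proof.
move=> hc.
have [p pp pK] := finPcharP K.
have pK' : p \in [pchar K'].
  apply: (@card_finPcharP _ p (logn p #|K|)) => //.
  by rewrite -hc; apply: (card_pprimeChar pK).
have [s [sB sM s1]] := ff_hom_aux pK pK' hc.
by exists (@srm K K' s sB sM s1).
Qed.

Section Basic.
Variables (F : fieldType) (I : finType) (r : nat) (w : I -> 'rV[F]_r).
Implicit Types (S L : {set I}).

Lemma spanS_sub S i : i \in S -> (w i <= spanS w S)%MS.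
Proof. by move=> iS; apply: (sumsmx_sup i) => //; rewrite genmxE. Qed.

Lemma spanS_mono S S' : S \subset S' -> (spanS w S <= spanS w S')%MS.
Proof.
move=> sSS; apply/sumsmx_subP => i iS; rewrite genmxE.
by apply: spanS_sub; exact: (subsetP sSS).
Qed.

Lemma spanU1 i S : (spanS w (i |: S) == <<w i>> + spanS w S)%MS.
Proof.
apply/andP; split.
  apply/sumsmx_subP => j; rewrite in_setU1 => /orP[/eqP->|jS]; rewrite genmxE.
    by apply: submx_trans (addsmxSl _ _); rewrite genmxE.
  exact: submx_trans (spanS_sub jS) (addsmxSr _ _).
by rewrite addsmx_sub genmxE spanS_sub ?setU11 // spanS_mono // subsetUr.
Qed.

Lemma cl_spec S i : (i \in cl w S) = (w i <= spanS w S)%MS.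
Proof.
rewrite inE /rk (eqmx_rank (spanU1 i S)).
have := mxrank_leqif_sup (addsmxSr <<w i>>%MS (spanS w S)).
case=> _; rewrite eq_sym => ->; by rewrite addsmx_sub genmxE submx_refl andbT.
Qed.

Lemma flat_sub S i : is_flat w S -> (w i <= spanS w S)%MS -> i \in S.
Proof. by move=> /subsetP fS wi; apply: fS; rewrite cl_spec. Qed.

Lemma cl_span S : (spanS w (cl w S) <= spanS w S)%MS.
Proof. by apply/sumsmx_subP => i; rewrite cl_spec genmxE. Qed.

Lemma line_rank L : is_line w L -> \rank (spanS w L) = 2%N.
Proof. by case/andP=> _ /eqP. Qed.

Lemma line_flat L : is_line w L -> is_flat w L.
Proof. by case/andP. Qed.

End Basic.

Lemma rankU1 (F : fieldType) k r (M : 'M[F]_(k, r)) (x : 'rV[F]_r) :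
  x != 0 -> \rank (M + <<x>>)%MS = (\rank M + ~~ (x <= M)%MS)%N.
Proof.
move=> xnz; case xM: (x <= M)%MS => /=.
  by rewrite addn0; have /addsmx_idPl -> : (<<x>> <= M)%MS by rewrite genmxE.
have := mxrank_sum_cap M <<x>>%MS; rewrite mxrank_gen rank_rV xnz.
suff -> : \rank (M :&: <<x>>)%MS = 0%N by rewrite addn0.
have le1 : (\rank (M :&: <<x>>)%MS <= 1)%N.
  by apply: leq_trans (mxrankS (capmxSr _ _)) _; rewrite mxrank_gen rank_rV xnz.
case: (ltnP (\rank (M :&: <<x>>)%MS) 1) => [|ge1]; first by case: (\rank _).
have := (mxrank_leqif_sup (capmxSr M <<x>>%MS)).2.
rewrite mxrank_gen rank_rV xnz eqn_leq le1 ge1 => /esym.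
by rewrite sub_capmx genmxE xM.
Qed.

Lemma rank2 (F : fieldType) r (a b : 'rV[F]_r) :
  a != 0 -> b != 0 -> ~~ (b <= a)%MS -> \rank (<<a>> + <<b>>)%MS = 2%N.
Proof. by move=> an bn nba; rewrite rankU1 // mxrank_gen rank_rV an genmxE nba. Qed.

Lemma map_big (K F : fieldType) (phi : {rmorphism K -> F}) (I : finType) r
  (w : I -> 'rV[K]_r) S :
  (map_mx phi (spanS w S) == spanS (fun i => map_mx phi (w i)) S)%MS.
Proof.
rewrite /spanS; elim/big_ind2: _ => [|M1 N1 M2 N2 e1 e2|i _].
- by rewrite map_mx0 submx_refl.
- apply/eqmxP; apply: eqmx_trans (map_addsmx _ _ _) _.
  by apply: adds_eqmx; apply/eqmxP.
- by apply/eqmxP; apply: map_genmx.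
Qed.

Section KSide.
Variables (n m : nat) (K : fieldType) (A : 'I_m -> 'rV[K]_n).
Variables (L0 : {set 'I_m}) (f : 'I_m).
Local Notation MK := (spanS A).
Definition fK (T : {set 'I_m}) (X : {set {set 'I_m}}) : nat :=
  if #|X| == 0%N then \rank (MK T)
  else if #|X| == 1%N then (\rank (MK T) + ~~ (MK (odflt set0 [pick L in X]) <= MK T)%MS)%N
  else (\rank (MK T + <<A f>>)%MS + ~~ (MK L0 <= MK T + <<A f>>)%MS)%N.
End KSide.

Lemma card_split m (S : {set 'I_m + {set 'I_m}}) :
  #|S| = (#|[set i | inl i \in S]| + #|[set L | inr L \in S]|)%N.
Proof.
rewrite -!sum1_card big_sumType.
by congr (_ + _)%N; apply: eq_bigl => x; rewrite inE.
Qed.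

Section Main.
Variables (n m : nat) (K : fieldType) (A : 'I_m -> 'rV[K]_n).
Hypothesis hA : is_PG_rep A.
Variables (L0 : {set 'I_m}) (f : 'I_m).
Hypotheses (hL0 : is_line A L0) (hf : f \notin L0).
Variables (F : fieldType) (phi : {rmorphism K -> F}) (v : 'rV[F]_n)
  (vL : {set 'I_m} -> 'rV[F]_n).
Hypotheses (hvs : (v <= spanS (fun i => map_mx phi (A i)) L0)%MS)
 (hvn : forall i, i \in L0 -> ~~ (v <= map_mx phi (A i))%MS)
 (hvL : forall L, L \in calL A L0 f ->
     [/\ vL L != 0, (vL L <= spanS (fun i => map_mx phi (A i)) L)%MS
       & (vL L <= <<v>> + <<map_mx phi (A f)>>)%MS]).

Local Notation MK := (spanS A).
Local Notation pA i := (map_mx phi (A i)).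
Local Notation MF := (spanS (fun i => map_mx phi (A i))).

Let hA1 i : A i != 0. Proof. by case: hA. Qed.
Let hA2 i j : i != j -> ~~ (A i <= A j)%MS. Proof. by case: hA => _ h _; apply: h. Qed.
Let hA3 (y : 'rV[K]_n) : y != 0 -> exists i, (y <= A i)%MS. Proof. by case: hA => _ _ h; apply: h. Qed.
Let rkA i : \rank (A i) = 1%N. Proof. by rewrite rank_rV hA1. Qed.
Let hmap S : (map_mx phi (MK S) :=: MF S)%MS. Proof. exact/eqmxP/map_big. Qed.

Lemma G0 k1 k2 (B : 'M[K]_(k1, n)) (C : 'M[K]_(k2, n)) (x : 'rV[F]_n) :
  x != 0 -> (x <= map_mx phi B)%MS -> (x <= map_mx phi C)%MS ->
  (\rank (B :&: C)%MS <= 1)%N -> exists i, (x <= pA i)%MS /\ (A i <= B :&: C)%MS.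
Proof.
move=> xnz xB xC rD.
have xD : (x <= map_mx phi (B :&: C))%MS by rewrite (map_capmx phi B C) sub_capmx xB xC.
have Dnz : (B :&: C)%MS != 0.
  apply: contraNneq xnz => D0; rewrite D0 map_mx0 in xD; by rewrite -submx0.
move: xD Dnz rD; set D := (B :&: C)%MS => xD Dnz rD.
have rD1 : \rank D = 1%N by apply/eqP; rewrite eqn_leq rD lt0n mxrank_eq0.
pose y := nz_row D.
have ynz : y != 0 by rewrite nz_row_eq0.
have yD : (y <= D)%MS := nz_row_sub D.
have Dy : (D <= y)%MS by rewrite -(mxrank_leqif_sup yD).2 rank_rV ynz rD1.
have [i yi] := hA3 ynz.
exists i; split.
  by apply: submx_trans xD _; rewrite map_submx; exact: submx_trans Dy yi.
have Aiy : (A i <= y)%MS by rewrite -(mxrank_leqif_sup yi).2 rank_rV ynz rkA.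
exact: submx_trans Aiy yD.
Qed.

Lemma Gline k1 k2 (B : 'M[K]_(k1, n)) (C : 'M[K]_(k2, n)) (x : 'rV[F]_n) :
  x != 0 -> (forall i, ~~ (x <= pA i)%MS) -> (x <= map_mx phi B)%MS ->
  (x <= map_mx phi C)%MS -> (\rank B <= 2)%N -> (B <= C)%MS.
Proof.
move=> xnz xg xB xC rB.
case: (leqP (\rank (B :&: C)%MS) 1) => [le|gt].
  by have [i [xi _]] := G0 xnz xB xC le; move: (xg i); rewrite xi.
have : (B <= B :&: C)%MS.
  rewrite -(mxrank_leqif_sup (capmxSl B C)).2 eqn_leq mxrankS ?capmxSl //=.
  exact: leq_trans rB gt.
by rewrite sub_capmx => /andP[].
Qed.

Let rank_le1 (k : nat) (B : 'M[K]_(k, n)) i : (\rank (B :&: A i)%MS <= 1)%N.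
Proof. by apply: leq_trans (mxrankS (capmxSr _ _)) _; rewrite rkA. Qed.

Let hvs' : (v <= map_mx phi (MK L0))%MS.
Proof. by rewrite (hmap L0). Qed.

Lemma L0_n0 : exists i, i \in L0.
Proof.
apply/set0Pn/eqP => e; have := line_rank hL0; rewrite e /spanS big_set0 mxrank0.
by [].
Qed.

Lemma vnz : v != 0.
Proof. have [i iL] := L0_n0; apply: contraNneq (hvn iL) => ->; exact: sub0mx. Qed.

Lemma vgen j : ~~ (v <= pA j)%MS.
Proof.
apply/negP => vj.
have [i [vi Ai]] := G0 vnz hvs' vj (rank_le1 _ j).
have iL : i \in L0.
  by apply: (flat_sub (line_flat hL0)); apply: submx_trans Ai (capmxSl _ _).
by move: (hvn iL); rewrite vi.
Qed.

Lemma calLP L : L \in calL A L0 f ->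
  [/\ is_line A L, L \subset cl A (f |: L0) & f \notin L].
Proof. by rewrite inE => /and3P. Qed.

Lemma xgen L : L \in calL A L0 f -> forall i, ~~ (vL L <= pA i)%MS.
Proof.
move=> hL; have [xnz xL xl] := hvL hL; have [lL _ fL] := calLP hL.
have xL' : (vL L <= map_mx phi (MK L))%MS by rewrite (hmap L).
move=> i; apply/negP => xi.
have iL : i \in L.
  have [j [xj Aj]] := G0 xnz xL' xi (rank_le1 _ i).
  have jL : j \in L by apply: (flat_sub (line_flat lL)); apply: submx_trans Aj (capmxSl _ _).
  case: (eqVneq j i) => [<- //|ne].
  by move: (hA2 ne); rewrite (submx_trans Aj (capmxSr _ _)).
have nif : i != f by apply: contraNneq fL => <-.
have il : (pA i <= <<v>> + <<pA f>>)%MS.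
  apply: submx_trans xl.
  by rewrite -(mxrank_leqif_sup xi).2 rank_rV xnz mxrank_map rkA.
set M2 := (<<A i>> + <<A f>>)%MS.
have rM2 : \rank M2 = 2%N by rewrite rank2 ?hA1 // hA2 // eq_sym.
have M2l : (map_mx phi M2 <= <<v>> + <<pA f>>)%MS.
  rewrite (map_addsmx phi) addsmx_sub (map_genmx phi (A i)) (map_genmx phi (A f)).
  by rewrite !genmxE il /= -{1}(genmxE (pA f)) addsmxSr.
have lM2 : (<<v>> + <<pA f>> <= map_mx phi M2)%MS.
  rewrite -(mxrank_leqif_sup M2l).2 mxrank_map rM2 eqn_leq; apply/andP; split.
    by rewrite -{1}rM2 -(mxrank_map phi M2) mxrankS.
  apply: leq_trans (mxrank_adds_leqif _ _).1 _.
  by rewrite !mxrank_gen !rank_rV; exact: (leq_add (leq_b1 _) (leq_b1 _)).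
have vM2 : (v <= map_mx phi M2)%MS.
  by apply: submx_trans lM2; apply: submx_trans (addsmxSl _ _); rewrite genmxE.
have L0M2 := Gline vnz vgen hvs' vM2 (eq_leq (line_rank hL0)).
have M2L0 : (M2 <= MK L0)%MS.
  by rewrite -(mxrank_leqif_sup L0M2).2 rM2 line_rank.
have fL0 : (A f <= MK L0)%MS.
  by apply: submx_trans M2L0; apply: submx_trans (addsmxSr _ _); rewrite genmxE.
by move: hf; rewrite (flat_sub (line_flat hL0) fL0).
Qed.

Definition rkTX (T : {set 'I_m}) (X : {set {set 'I_m}}) : nat :=
  \rank (MF T + \sum_(L in X) <<vL L>>)%MS.

Lemma rkTX0 (T : {set 'I_m}) : rkTX T set0 = \rank (MK T).
Proof. by rewrite /rkTX big_set0 addsmx0 -(hmap T) mxrank_map. Qed.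

Lemma rkTX1 (T L : {set 'I_m}) : L \in calL A L0 f ->
  rkTX T [set L] = (\rank (MK T) + ~~ (MK L <= MK T)%MS)%N.
Proof.
move=> hL; have [xnz xL xl] := hvL hL; have [lL _ _] := calLP hL.
have xL' : (vL L <= map_mx phi (MK L))%MS by rewrite (hmap L).
rewrite /rkTX big_set1 rankU1 // -(hmap T) mxrank_map -(hmap T).
have -> : (vL L <= map_mx phi (MK T))%MS = (MK L <= MK T)%MS.
  apply/idP/idP => [xT|LT].
    exact: (Gline xnz (xgen hL) xL' xT (eq_leq (line_rank lL))).
  by apply: submx_trans xL' _; rewrite map_submx.
by [].
Qed.

Lemma rkTX2 (T : {set 'I_m}) (X : {set {set 'I_m}}) : X \subset calL A L0 f -> (1 < #|X|)%N ->
  rkTX T X = (\rank (MK T + <<A f>>)%MS + ~~ (MK L0 <= MK T + <<A f>>)%MS)%N.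
Proof.
move=> hX /card_gt1P [L1 [L2 [L1X L2X ne]]].
have hL1 := subsetP hX _ L1X; have hL2 := subsetP hX _ L2X.
have [x1nz x1L x1l] := hvL hL1; have [x2nz x2L x2l] := hvL hL2.
have [lL1 _ _] := calLP hL1; have [lL2 _ _] := calLP hL2.
have x1L' : (vL L1 <= map_mx phi (MK L1))%MS by rewrite (hmap L1).
have x2L' : (vL L2 <= map_mx phi (MK L2))%MS by rewrite (hmap L2).
set l := (<<v>> + <<pA f>>)%MS.
have Sl : (\sum_(L in X) <<vL L>> <= l)%MS.
  apply/sumsmx_subP => L LX; rewrite genmxE.
  by case: (hvL (subsetP hX _ LX)).
have n21 : ~~ (vL L2 <= vL L1)%MS.
  apply/negP => x21.
  have x2L1 : (vL L2 <= map_mx phi (MK L1))%MS by apply: submx_trans x21 x1L'.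
  have s21 := Gline x2nz (xgen hL2) x2L' x2L1 (eq_leq (line_rank lL2)).
  have s12 : (MK L1 <= MK L2)%MS.
    by rewrite -(mxrank_leqif_sup s21).2 !line_rank.
  move/negP: ne; apply; rewrite eqEsubset; apply/andP; split;
    apply/subsetP => i iL.
    apply: (flat_sub (line_flat lL2)).
    exact: submx_trans (spanS_sub _ iL) s12.
  apply: (flat_sub (line_flat lL1)).
  exact: submx_trans (spanS_sub _ iL) s21.
have r12 := rank2 x1nz x2nz n21.
have sub12 : (<<vL L1>> + <<vL L2>> <= \sum_(L in X) <<vL L>>)%MS.
  by rewrite addsmx_sub; apply/andP; split; apply: (sumsmx_sup _ _ (submx_refl _)).
have lS : (l <= \sum_(L in X) <<vL L>>)%MS.
  rewrite -(mxrank_leqif_sup Sl).2 eqn_leq; apply/andP; split.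
    by apply: mxrankS.
  apply: leq_trans (mxrank_adds_leqif _ _).1 _.
  rewrite !mxrank_gen !rank_rV; apply: leq_trans (leq_add (leq_b1 _) (leq_b1 _)) _.
  by apply: leq_trans _ (mxrankS sub12); rewrite r12.
have El : (\sum_(L in X) <<vL L>> :=: l)%MS by apply/eqmxP/andP.
rewrite /rkTX (adds_eqmx (eqmx_refl (MF T)) El) /l addsmxA.
rewrite -[(MF T + <<v>>)%MS]addsmxC -addsmxA addsmxC rankU1 ?vnz //.
have E : (MF T + <<pA f>> :=: map_mx phi (MK T + <<A f>>)%MS)%MS.
  apply: eqmx_sym; apply: eqmx_trans (map_addsmx phi _ _) _.
  exact: adds_eqmx (hmap T) (map_genmx phi (A f)).
rewrite E mxrank_map E.
have -> : (v <= map_mx phi (MK T + <<A f>>)%MS)%MS = (MK L0 <= MK T + <<A f>>)%MS.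
  apply/idP/idP => [vT|LT].
    exact: (Gline vnz vgen hvs' vT (eq_leq (line_rank hL0))).
  by apply: submx_trans hvs' _; rewrite map_submx.
by [].
Qed.

Lemma rkTX_fK (T : {set 'I_m}) (X : {set {set 'I_m}}) : X \subset calL A L0 f -> rkTX T X = fK A L0 f T X.
Proof.
move=> hX; rewrite /fK.
case: (eqVneq #|X| 0%N) => [/eqP|nz0]; first by rewrite cards_eq0 => /eqP ->; rewrite rkTX0.
case: (eqVneq #|X| 1%N) => [/eqP/cards1P [L eX]|nz1].
  have hL : L \in calL A L0 f by apply: (subsetP hX); rewrite eX set11.
  rewrite eX (rkTX1 _ hL).
  by case: pickP => [L' /set1P -> //|/(_ L)]; rewrite set11.
rewrite rkTX2 //; case: #|X| nz0 nz1 => [|[|k]] //.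
Qed.

Lemma rk_split (S : {set 'I_m + {set 'I_m}}) :
  rk (PGbar_vec phi A vL) S = rkTX [set i | inl i \in S] [set L | inr L \in S].
Proof.
rewrite /rk /spanS big_sumType /rkTX /spanS.
by congr (\rank (_ + _))%MS; apply: eq_bigl => x; rewrite inE.
Qed.

Lemma indep_fK (S : {set 'I_m + {set 'I_m}}) : S \subset PGbar_ground A L0 f ->
  indep (PGbar_vec phi A vL) S =
  (fK A L0 f [set i | inl i \in S] [set L | inr L \in S] ==
    #|[set i | inl i \in S]| + #|[set L | inr L \in S]|)%N.
Proof.
move=> hS; rewrite /indep rk_split rkTX_fK ?card_split //.
apply/subsetP => L; rewrite inE => LS.
by have := subsetP hS _ LS; rewrite inE.
Qed.

End Main.

Unset Implicit Arguments.

Theorem lemma4p2 (q n : nat) (hq : exists p k : nat, prime p /\ q = (p ^ k.+1)%N)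
  (hn : (3 <= n)%N)
  (K : finFieldType) (hK : #|K| = q)
  (F : fieldType) (phi : {rmorphism K -> F})
  (m : nat) (A : 'I_m -> 'rV[K]_n) (hA : is_PG_rep A)
  (L0 : {set 'I_m}) (hL0 : is_line A L0)
  (v : 'rV[F]_n)
  (hv_span : (v <= spanS (fun i => map_mx phi (A i)) L0)%MS)
  (hv_npar : forall i, i \in L0 -> ~~ (v <= map_mx phi (A i))%MS)
  (f : 'I_m) (hf : f \notin L0)
  (vL : {set 'I_m} -> 'rV[F]_n)
  (hvL : forall L, L \in calL A L0 f ->
     [/\ vL L != 0,
         (vL L <= spanS (fun i => map_mx phi (A i)) L)%MS
       & (vL L <= <<v>> + <<map_mx phi (A f)>>)%MS]) :
  GFq_regular q (PGbar_vec phi A vL) (PGbar_ground A L0 f).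
Proof.
move=> K' F' psi hK' nsurj.
have [sig _] : exists sig : {rmorphism K -> K'}, True by apply: ff_iso; rewrite hK hK'.
pose tau : {rmorphism K -> F'} := (psi \o sig)%FUN.
have [y hy] : exists y : F', forall x : K', psi x != y.
  apply: NNPP => H; apply: nsurj => y; apply: NNPP => H2; apply: H; exists y => x.
  by apply/eqP => e; apply: H2; exists x.
have hy' : forall x : K, tau x != y by move=> x; exact: hy.
pose M := spanS A L0.
have hr : \rank M = 2%N := line_rank hL0.
have r0 : (0 < \rank M)%N by rewrite hr.
have r1 : (1 < \rank M)%N by rewrite hr.
pose j0 := Ordinal r0; pose j1 := Ordinal r1.
pose e : 'rV[F']_(\rank M) := \row_j (if j == j0 then 1 else if j == j1 then y else 0).
pose B := row_base M.
pose v' := e *m map_mx tau B.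
have hvs' : (v' <= spanS (fun i => map_mx tau (A i)) L0)%MS.
  apply: submx_trans (submxMl _ _) _.
  rewrite -(eqmxP (map_big tau A L0)) map_submx.
  by rewrite eq_row_base.
have hvn' : forall i, i \in L0 -> ~~ (v' <= map_mx tau (A i))%MS.
  move=> i iL; apply/negP => /sub_rVP [lam Hv].
  have : (A i <= B)%MS by rewrite eq_row_base; exact: spanS_sub.
  case/submxP => z Hz.
  have he : e = lam *: map_mx tau z.
    have rf : row_free (map_mx tau B) by rewrite row_free_map row_base_free.
    apply: (row_free_inj rf); rewrite /= -/v' Hv Hz map_mxM -scalemxAl.
    by [].
  have e0 := congr1 (fun w : 'rV[F']_(\rank M) => w 0 j0) he.
  have e1 := congr1 (fun w : 'rV[F']_(\rank M) => w 0 j1) he.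
  move: e0 e1; rewrite !mxE /= => e0 e1.
  have t0 : psi (sig (z 0 j0)) != 0.
    by apply/eqP => t0; move: e0; rewrite t0 mulr0; apply/eqP; exact: oner_neq0.
  have lamE : lam = (psi (sig (z 0 j0)))^-1.
    by rewrite -[lam]mulr1 -(divff t0) mulrA -e0 mul1r.
  move: (hy (sig (z 0 j1 / z 0 j0))); rewrite !fmorph_div e1 lamE mulrC.
  by rewrite eqxx.
have vgen' := vgen hA hL0 hvs' hvn'.
have vnz' := vnz hL0 hvn'.
pose vL' := fun L : {set 'I_m} =>
  nz_row (map_mx tau (spanS A L) :&: (<<v'>> + <<map_mx tau (A f)>>))%MS.
have hvL' : forall L, L \in calL A L0 f ->
     [/\ vL' L != 0,
         (vL' L <= spanS (fun i => map_mx tau (A i)) L)%MS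
       & (vL' L <= <<v'>> + <<map_mx tau (A f)>>)%MS].
  move=> L hL; have [lL Lcl fL] := calLP hL.
  set P := map_mx tau (spanS A L); set Q := (<<v'>> + <<map_mx tau (A f)>>)%MS.
  have Afnz : map_mx tau (A f) != 0 by rewrite map_mx_eq0; case: hA.
  have rP : \rank P = 2%N by rewrite mxrank_map line_rank.
  have rQ : \rank Q = 2%N.
    apply: rank2 => //; apply/negP => fv.
    move: (vgen' f); rewrite -(mxrank_leqif_sup fv).2.
    by rewrite !rank_rV vnz' Afnz.
  pose N := spanS A (f |: L0).
  have PN : (P <= map_mx tau N)%MS.
    rewrite map_submx; apply: submx_trans (cl_span A (f |: L0)).
    exact: spanS_mono.
  have QN : (Q <= map_mx tau N)%MS.
    rewrite addsmx_sub !genmxE; apply/andP; split.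
      apply: submx_trans hvs' _; rewrite -(eqmxP (map_big tau A L0)) map_submx.
      by apply: spanS_mono; exact: subsetUr.
    by rewrite map_submx spanS_sub // setU11.
  have rN : (\rank (map_mx tau N) <= 3)%N.
    rewrite mxrank_map /N (eqmx_rank (spanU1 A f L0)).
    apply: leq_trans (mxrank_adds_leqif _ _).1 _.
    by rewrite mxrank_gen rank_rV hr; case: (A f != 0).
  have rPQ : (\rank (P + Q)%MS <= 3)%N.
    apply: leq_trans rN; apply: mxrankS; by rewrite addsmx_sub PN QN.
  have capnz : (P :&: Q)%MS != 0.
    rewrite -mxrank_eq0; apply/negP => /eqP r0'.
    have := mxrank_sum_cap P Q; rewrite r0' rP rQ addn0 => e4.
    by move: rPQ; rewrite e4.
  split.
  - by rewrite nz_row_eq0.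
  - apply: submx_trans (nz_row_sub _) _; apply: submx_trans (capmxSl _ _) _.
    by rewrite /P (eqmxP (map_big tau A L)) submx_refl.
  - by apply: submx_trans (nz_row_sub _) _; exact: capmxSr.
exists n, (PGbar_vec tau A vL') => S hS.
by rewrite (indep_fK hA hL0 hf hv_span hv_npar hvL hS) (indep_fK hA hL0 hf hvs' hvn' hvL' hS).
Qed.
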